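(* Let $(\varphi,\tau_0)\in C((-\infty,0],C(\Omega))\times C_+(\Omega)$, $r\in(0,+\infty]$, $A\in C((-\infty,r),C(\Omega))$ with $A=\varphi$ on $(-\infty,0]$, and let $\tau$ be the solution of (3.1). Assume there is $M>0$ with $\sup_{t\in[0,r)}\|A(t,\cdot)\|_\infty\le M$. Set $\tau_0^\infty:=\sup_{x}\tau_0(x)$, $\varphi_{\max}:=\sup_{t\in[-\tau_0^\infty,0]}\|\varphi(t,\cdot)\|_\infty$, $M_1:=\max\{M,\varphi_{\max}\}$, and $$\tau_{\min}:=\frac{\inf_{x\in\Omega}[\tau_0(x)f(\varphi_{\max})(x)]}{\sup_{x\in\Omega}f(-M_1)(x)},\qquad \tau_{\max}:=\frac{\sup_{x\in\Omega}[\tau_0(x)f(-\varphi_{\max})(x)]}{\inf_{x\in\Omega}f(M_1)(x)}.$$ Then $0\le\tau_{\min}\le\tau(t,x)\le\tau_{\max}$ for all $t\in[0,r)$ and $x\in\Omega$.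
   Context: $\Omega\subset\mathbb R^n$ compact, $C(\Omega)$ with sup norm, $C_+(\Omega)$ nonnegative functions. $f:C(\Omega)\to C(\Omega)$ is Lipschitz, $0<f(\phi)(x)\le M_f$ for a constant $M_f$, non-increasing for the pointwise order. A real constant $c$ is identified with the constant function $c$ on $\Omega$, so $f(c)\in C(\Omega)$. Equation (3.1): $\int_{t-\tau(t,x)}^tf(A(s,\cdot))(x)ds=\int_{-\tau_0(x)}^0f(\varphi(s,\cdot))(x)ds$ for $t\in[0,r)$, $x\in\Omega$; it has a unique solution $\tau:[0,r)\to C(\Omega)$ with $\tau\ge0$. *)

(* Defs.v *)
From Stdlib Require Import Reals Lra List ClassicalEpsilon.
Open Scope R_scope.

(* Points of R^n are represented as nat -> R whose coordinates of index >= n vanish. *)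
Definition eucl_dist (n : nat) (x y : nat -> R) : R :=
  sqrt (fold_right Rplus 0 (map (fun i => (x i - y i) ^ 2) (seq 0 n))).

Definition compact_in_Rn (n : nat) (Omega : (nat -> R) -> Prop) : Prop :=
  (forall x, Omega x -> forall i, (n <= i)%nat -> x i = 0) /\
  (forall u : nat -> (nat -> R), (forall k, Omega (u k)) ->
     exists phi : nat -> nat, (forall k, (phi k < phi (S k))%nat) /\
       exists l, Omega l /\
         forall eps, 0 < eps -> exists N : nat, forall k, (N <= k)%nat ->
           eucl_dist n (u (phi k)) l < eps).

(* Supremum / infimum of a set of reals (meaningful when the lub exists). *)
Definition Rsup (E : R -> Prop) : R := epsilon (inhabits 0) (fun s => is_lub E s).
Definition Rinf (E : R -> Prop) : R := - Rsup (fun y => E (- y)).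

(* Elements of C(Omega) are represented by functions on the subtype {x | Omega x}. *)
Definition contC {Omega : (nat -> R) -> Prop} (n : nat) (u : sig Omega -> R) : Prop :=
  forall x eps, 0 < eps -> exists delta, 0 < delta /\
    forall y, eucl_dist n (proj1_sig x) (proj1_sig y) < delta ->
      Rabs (u x - u y) < eps.

Definition supnorm {Omega : (nat -> R) -> Prop} (u : sig Omega -> R) : R :=
  Rsup (fun y => exists x, y = Rabs (u x)).

Definition constC {Omega : (nat -> R) -> Prop} (c : R) : sig Omega -> R := fun _ => c.

Definition cont_into_C {Omega : (nat -> R) -> Prop} (n : nat) (D : R -> Prop)
  (g : R -> sig Omega -> R) : Prop :=
  (forall t, D t -> contC n (g t)) /\
  (forall t0, D t0 -> forall eps, 0 < eps -> exists delta, 0 < delta /\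
     forall t, D t -> Rabs (t - t0) < delta ->
       supnorm (fun x => g t x - g t0 x) < eps).

(* r in (0, +infinity]: None stands for +infinity *)
Definition below (r : option R) (t : R) : Prop :=
  match r with Some r' => t < r' | None => True end.
Definition pos_ext (r : option R) : Prop :=
  match r with Some r' => 0 < r' | None => True end.

(* Main.v *)
Require Import Defs.
From Stdlib Require Import Reals Lra Lia List ClassicalEpsilon Classical ZArith FunctionalExtensionality PropExtensionality.
Open Scope R_scope.

Lemma nat_unb (B : R) : exists N : nat, B < INR N.
Proof.
  destruct (archimed B) as [H1 _].
  exists (Z.abs_nat (up B)).
  rewrite INR_IZR_INZ, Zabs2Nat.id_abs, Z.abs_max.
  apply Rlt_le_trans with (IZR (up B)); auto.
  apply IZR_le. apply Z.le_max_l.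
Qed.

Lemma Rsup_lub (E : R -> Prop) : bound E -> (exists x, E x) -> is_lub E (Rsup E).
Proof.
  intros Hb Hn. destruct (completeness E Hb Hn) as [m Hm].
  unfold Rsup. apply epsilon_spec. exists m; exact Hm.
Qed.

Lemma Rsup_ge (E : R -> Prop) z : bound E -> E z -> z <= Rsup E.
Proof. intros Hb Hz. apply (Rsup_lub E Hb (ex_intro _ z Hz)). exact Hz. Qed.

Lemma Rsup_le (E : R -> Prop) B : (exists x, E x) -> (forall z, E z -> z <= B) -> Rsup E <= B.
Proof. intros Hn Hb. apply (Rsup_lub E (ex_intro _ B Hb) Hn). exact Hb. Qed.

Section Om.
Variable Omega : (nat -> R) -> Prop.
Variable Hne : exists x, Omega x.

Lemma sig_inh : exists x : sig Omega, True.
Proof. destruct Hne as [x Hx]. exists (exist _ x Hx); auto. Qed.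

Lemma gsup_ge (g : sig Omega -> R) B x : (forall y, g y <= B) ->
  g x <= Rsup (fun z => exists y, z = g y).
Proof. intros HB. apply Rsup_ge. exists B. intros z [y ->]. auto. exists x; reflexivity. Qed.

Lemma gsup_le (g : sig Omega -> R) B : (forall y, g y <= B) ->
  Rsup (fun z => exists y, z = g y) <= B.
Proof. intros HB. apply Rsup_le. destruct sig_inh as [y _]. exists (g y); exists y; reflexivity.
  intros z [y ->]. auto. Qed.

Lemma ginf_le (g : sig Omega -> R) B x : (forall y, B <= g y) ->
  Rinf (fun z => exists y, z = g y) <= g x.
Proof. intros HB. unfold Rinf.
  assert (- g x <= Rsup (fun y => exists y0, - y = g y0)).
  { apply Rsup_ge. exists (-B). intros z [y Hy]. specialize (HB y). lra.
    exists x. lra. }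
  lra. Qed.

Lemma ginf_ge (g : sig Omega -> R) B : (forall y, B <= g y) ->
  B <= Rinf (fun z => exists y, z = g y).
Proof. intros HB. unfold Rinf.
  assert (Rsup (fun y => exists y0, - y = g y0) <= - B).
  { apply Rsup_le. destruct sig_inh as [y _]. exists (- g y). exists y. lra.
    intros z [y Hy]. specialize (HB y). lra. }
  lra. Qed.

Lemma supnorm_ge (u : sig Omega -> R) B x : (forall y, Rabs (u y) <= B) ->
  Rabs (u x) <= supnorm u.
Proof. intros HB. unfold supnorm. apply (gsup_ge (fun y => Rabs (u y)) B x). auto. Qed.

Lemma supnorm_le (u : sig Omega -> R) B : (forall y, Rabs (u y) <= B) ->
  supnorm u <= B.
Proof. intros HB. unfold supnorm. apply (gsup_le (fun y => Rabs (u y))). auto. Qed.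

End Om.

Lemma eucl_sym n x y : eucl_dist n x y = eucl_dist n y x.
Proof. unfold eucl_dist. f_equal. f_equal. apply map_ext. intros. ring. Qed.

Lemma incr_ge (phi : nat -> nat) : (forall k, (phi k < phi (S k))%nat) -> forall k, (k <= phi k)%nat.
Proof. intros H k. induction k. lia. specialize (H k). lia. Qed.

Section Cpt.
Variable n : nat.
Variable Omega : (nat -> R) -> Prop.
Variable HOm : compact_in_Rn n Omega.

Lemma extract (g : sig Omega -> R) (Hg : contC n g) (u : nat -> sig Omega) :
  exists phi : nat -> nat, (forall k, (k <= phi k)%nat) /\ exists xl : sig Omega,
   forall eps, 0 < eps -> exists N, forall k, (N <= k)%nat -> Rabs (g xl - g (u (phi k))) < eps.
Proof.
  destruct HOm as [_ HC].
  destruct (HC (fun k => proj1_sig (u k)) (fun k => proj2_sig (u k))) as [phi [Hphi [l [Hl Hcv]]]].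
  exists phi. split. apply incr_ge; auto.
  exists (exist _ l Hl). intros eps Heps.
  destruct (Hg (exist _ l Hl) eps Heps) as [d [Hd Hd2]].
  destruct (Hcv d Hd) as [N HN]. exists N. intros k Hk.
  apply Hd2. simpl. rewrite eucl_sym. apply HN; auto.
Qed.

Lemma cont_bdd (g : sig Omega -> R) (Hg : contC n g) : exists B, forall y, g y <= B.
Proof.
  apply NNPP. intro Hn.
  assert (Hu : forall k : nat, exists y, INR k < g y).
  { intro k. apply NNPP. intro H. apply Hn. exists (INR k). intro y.
    apply Rnot_lt_le. intro. apply H. eauto. }
  destruct (choice _ Hu) as [u Hu2].
  destruct (extract g Hg u) as [phi [Hphi [xl Hcv]]].
  destruct (Hcv 1 Rlt_0_1) as [N HN].
  destruct (nat_unb (g xl + 1)) as [N2 HN2].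
  specialize (HN (max N N2) (Nat.le_max_l _ _)).
  specialize (Hu2 (phi (max N N2))).
  assert (INR N2 <= INR (phi (max N N2))). { apply le_INR. specialize (Hphi (max N N2)). lia. }
  apply Rabs_def2 in HN. lra.
Qed.

Lemma cont_max (g : sig Omega -> R) (Hg : contC n g) (Hne : exists x, Omega x) :
  exists xm, forall y, g y <= g xm.
Proof.
  destruct (cont_bdd g Hg) as [B HB].
  set (S := Rsup (fun z => exists y, z = g y)).
  assert (Hub : forall y, g y <= S) by (intro y; apply gsup_ge with B; auto).
  assert (Hu : forall k : nat, exists y, S - / (INR k + 1) < g y).
  { intro k. apply NNPP. intro H.
    assert (S <= S - / (INR k + 1)).
    { apply gsup_le; auto. intro y. apply Rnot_lt_le. intro. apply H. eauto. }
    assert (0 < / (INR k + 1)). { apply Rinv_0_lt_compat. pose proof (pos_INR k). lra. }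
    lra. }
  destruct (choice _ Hu) as [u Hu2].
  destruct (extract g Hg u) as [phi [Hphi [xl Hcv]]].
  exists xl. intro y. apply Rle_trans with S; auto.
  apply Rnot_lt_le. intro Hlt.
  set (e := (S - g xl) / 2).
  assert (He : 0 < e) by (unfold e; lra).
  destruct (Hcv e He) as [N HN].
  destruct (archimed_cor1 e He) as [N2 [HN2 HN2']].
  set (k := max N N2).
  specialize (HN k (Nat.le_max_l _ _)). specialize (Hu2 (phi k)).
  assert (INR N2 <= INR (phi k)). { apply le_INR. specialize (Hphi k). pose proof (Nat.le_max_r N N2) as Hmx. fold k in Hmx. lia. }
  assert (0 < INR N2) by (apply lt_0_INR; lia).
  assert (/ (INR (phi k) + 1) <= / INR N2). { apply Rinv_le_contravar; lra. }
  apply Rabs_def2 in HN. unfold e in *. lra.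
Qed.

Lemma cont_min (g : sig Omega -> R) (Hg : contC n g) (Hne : exists x, Omega x) :
  exists xm, forall y, g xm <= g y.
Proof.
  destruct (cont_max (fun y => - g y)) as [xm Hxm]; auto.
  { intros x eps He. destruct (Hg x eps He) as [d [Hd H]]. exists d. split; auto.
    intros y Hy. specialize (H y Hy). rewrite <- Rabs_Ropp. replace (- (- g x - - g y)) with (g x - g y) by ring. auto. }
  exists xm. intro y. specialize (Hxm y). lra.
Qed.

Lemma cont_abs_bdd (g : sig Omega -> R) (Hg : contC n g) (Hne : exists x, Omega x) :
  exists B, forall y, Rabs (g y) <= B.
Proof.
  destruct (cont_max g Hg Hne) as [a Ha]. destruct (cont_min g Hg Hne) as [b Hb].
  exists (Rmax (Rabs (g a)) (Rabs (g b))). intro y. specialize (Ha y). specialize (Hb y).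
  pose proof (Rmax_l (Rabs (g a)) (Rabs (g b))). pose proof (Rmax_r (Rabs (g a)) (Rabs (g b))).
  pose proof (Rle_abs (g a)). pose proof (Rle_abs (- g b)). rewrite Rabs_Ropp in *.
  apply Rabs_le. lra.
Qed.

End Cpt.

Lemma supnorm_diff (Omega : (nat -> R) -> Prop) (Hne : exists x, Omega x) (u v : sig Omega -> R) Bu Bv :
  (forall y, Rabs (u y) <= Bu) -> (forall y, Rabs (v y) <= Bv) ->
  supnorm u - supnorm v <= supnorm (fun x => u x - v x).
Proof.
  intros Hu Hv.
  assert (Hd : forall y, Rabs (u y - v y) <= Bu + Bv).
  { intro y. specialize (Hu y); specialize (Hv y). pose proof (Rabs_triang (u y) (- v y)).
    rewrite Rabs_Ropp in H. unfold Rminus. lra. }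
  assert (supnorm u <= supnorm v + supnorm (fun x => u x - v x)); [|lra].
  apply supnorm_le; [exact Hne|]. intro y.
  pose proof (supnorm_ge Omega v Bv y Hv).
  pose proof (supnorm_ge Omega (fun x => u x - v x) _ y Hd). simpl in H0.
  pose proof (Rabs_triang (v y) (u y - v y)). replace (v y + (u y - v y)) with (u y) in H1 by ring.
  lra.
Qed.

Lemma supnorm_sym (Omega : (nat -> R) -> Prop) (a b : sig Omega -> R) :
  supnorm (fun x => a x - b x) = supnorm (fun x => b x - a x).
Proof.
  unfold supnorm. f_equal. apply functional_extensionality. intro z.
  apply propositional_extensionality. split; intros [x Hx]; exists x; rewrite Hx; apply Rabs_minus_sym.
Qed.

Lemma phi_bdd n (Omega : (nat -> R) -> Prop) (HOm : compact_in_Rn n Omega) (Hne : exists x, Omega x)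
  (phi : R -> sig Omega -> R) (Hphi : cont_into_C n (fun t => t <= 0) phi) a b :
  a <= b -> b <= 0 -> exists K, forall s, a <= s <= b -> supnorm (phi s) <= K.
Proof.
  intros Hab Hb.
  set (h := fun s => supnorm (phi (Rmin s 0))).
  assert (Hc : forall c, continuity_pt h c).
  { intro c. intros eps Heps.
    assert (Hc0 : Rmin c 0 <= 0) by apply Rmin_r.
    destruct (proj2 Hphi (Rmin c 0) Hc0 eps Heps) as [d [Hd H]].
    exists d. split; auto. intros s [_ Hs]. simpl in *. unfold R_dist in *.
    assert (Hs0 : Rmin s 0 <= 0) by apply Rmin_r.
    assert (Habs : Rabs (Rmin s 0 - Rmin c 0) < d).
    { apply Rle_lt_trans with (Rabs (s - c)); auto.
      unfold Rmin. destruct (Rle_dec s 0); destruct (Rle_dec c 0); split_Rabs; lra. }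
    pose proof (H _ Hs0 Habs) as H1.
    destruct (cont_abs_bdd n Omega HOm _ (proj1 Hphi _ Hs0) Hne) as [B1 HB1].
    destruct (cont_abs_bdd n Omega HOm _ (proj1 Hphi _ Hc0) Hne) as [B2 HB2].
    pose proof (supnorm_diff Omega Hne _ _ _ _ HB1 HB2).
    pose proof (supnorm_diff Omega Hne _ _ _ _ HB2 HB1).
    assert (supnorm (fun x => phi (Rmin c 0) x - phi (Rmin s 0) x) = supnorm (fun x => phi (Rmin s 0) x - phi (Rmin c 0) x)).
    { apply supnorm_sym. }
    unfold h. split_Rabs; lra. }
  destruct (continuity_ab_maj h a b Hab (fun c _ => Hc c)) as [Mx [HM _]].
  exists (h Mx). intros s Hs. specialize (HM s Hs). unfold h in HM.
  replace (Rmin s 0) with s in HM; auto. unfold Rmin. destruct (Rle_dec s 0); lra.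
Qed.

Theorem lemma3p8
  (n : nat) (Omega : (nat -> R) -> Prop)
  (HOmega : compact_in_Rn n Omega) (Hne : exists x, Omega x)
  (f : (sig Omega -> R) -> (sig Omega -> R)) (Mf : R)
  (Hf_C : forall u, contC n u -> contC n (f u))
  (Hf_lip : exists L, forall u v, contC n u -> contC n v ->
      supnorm (fun x => f u x - f v x) <= L * supnorm (fun x => u x - v x))
  (Hf_bnd : forall u, contC n u -> forall x, 0 < f u x <= Mf)
  (Hf_dec : forall u v, contC n u -> contC n v ->
      (forall x, u x <= v x) -> forall x, f v x <= f u x)
  (phi : R -> sig Omega -> R) (tau0 : sig Omega -> R)
  (Hphi : cont_into_C n (fun t => t <= 0) phi)
  (Htau0 : contC n tau0) (Htau0_pos : forall x, 0 <= tau0 x)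
  (r : option R) (Hr : pos_ext r)
  (A : R -> sig Omega -> R)
  (HA : cont_into_C n (below r) A)
  (HAphi : forall t, t <= 0 -> forall x, A t x = phi t x)
  (tau : R -> sig Omega -> R)
  (Htau_C : forall t, 0 <= t -> below r t -> contC n (tau t))
  (Htau_pos : forall t x, 0 <= t -> below r t -> 0 <= tau t x)
  (Htau_eq : forall t x, 0 <= t -> below r t ->
      exists (pr1 : Riemann_integrable (fun s => f (A s) x) (t - tau t x) t)
             (pr2 : Riemann_integrable (fun s => f (phi s) x) (- tau0 x) 0),
        RiemannInt pr1 = RiemannInt pr2)
  (M : R) (HM : 0 < M)
  (HAM : forall t, 0 <= t -> below r t -> supnorm (A t) <= M) :
  let tau0_inf := Rsup (fun y => exists x, y = tau0 x) in
  let phi_max := Rsup (fun y => exists t, - tau0_inf <= t <= 0 /\ y = supnorm (phi t)) in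
  let M1 := Rmax M phi_max in
  let tau_min := Rinf (fun y => exists x, y = tau0 x * f (constC phi_max) x)
                 / Rsup (fun y => exists x, y = f (constC (- M1)) x) in
  let tau_max := Rsup (fun y => exists x, y = tau0 x * f (constC (- phi_max)) x)
                 / Rinf (fun y => exists x, y = f (constC M1) x) in
  0 <= tau_min /\
  forall t x, 0 <= t -> below r t -> tau_min <= tau t x <= tau_max.
Proof.
  intros tau0_inf phi_max M1 tau_min tau_max.
  assert (Hc : forall c, contC n (@constC Omega c)).
  { intros c x e He. exists 1. split. lra. intros y _. unfold constC.
    rewrite Rminus_diag_eq, Rabs_R0; auto. }
  assert (Hbelow : forall s t, below r t -> s <= t -> below r s).
  { intros s t. destruct r; simpl; auto. intros; lra. }
  destruct (cont_max n Omega HOmega tau0 Htau0 Hne) as [xT HxT].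
  assert (Hti : forall x, tau0 x <= tau0_inf).
  { intro x. apply gsup_ge with (tau0 xT). auto. }
  assert (Hti0 : 0 <= tau0_inf).
  { destruct (sig_inh Omega Hne) as [x _]. specialize (Hti x). specialize (Htau0_pos x). lra. }
  destruct (phi_bdd n Omega HOmega Hne phi Hphi (- tau0_inf) 0) as [K0 HK0]; try lra.
  assert (Hpm : forall s, - tau0_inf <= s <= 0 -> supnorm (phi s) <= phi_max).
  { intros s Hs. apply Rsup_ge. exists K0. intros z [t [Ht ->]]. auto. eauto. }
  assert (Hpm0 : 0 <= phi_max).
  { apply Rle_trans with (supnorm (phi 0)). 2: apply Hpm; lra.
    destruct (sig_inh Omega Hne) as [x _].
    destruct (cont_abs_bdd n Omega HOmega _ (proj1 Hphi 0 (Rle_refl 0)) Hne) as [B HB].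
    apply Rle_trans with (Rabs (phi 0 x)). apply Rabs_pos. apply supnorm_ge with B; auto. }
  assert (Hphib : forall s, - tau0_inf <= s <= 0 -> forall y, Rabs (phi s y) <= phi_max).
  { intros s Hs y.
    destruct (cont_abs_bdd n Omega HOmega _ (proj1 Hphi s (proj2 Hs)) Hne) as [B HB].
    apply Rle_trans with (supnorm (phi s)). apply supnorm_ge with B; auto. auto. }
  assert (HAb : forall s, 0 <= s -> below r s -> forall y, Rabs (A s y) <= M).
  { intros s Hs Hbs y.
    destruct (cont_abs_bdd n Omega HOmega _ (proj1 HA s Hbs) Hne) as [B HB].
    apply Rle_trans with (supnorm (A s)). apply supnorm_ge with B; auto. auto. }
  assert (HM1a : M <= M1) by apply Rmax_l.
  assert (HM1b : phi_max <= M1) by apply Rmax_r.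
  set (Sm := Rsup (fun y => exists x, y = f (constC (- M1)) x)).
  assert (HSm : forall x, f (constC (- M1)) x <= Sm).
  { intro x. apply gsup_ge with Mf. intro y. apply Hf_bnd, Hc. }
  set (Im := Rinf (fun y => exists x, y = f (constC M1) x)).
  destruct (cont_min n Omega HOmega _ (Hf_C _ (Hc M1)) Hne) as [xm Hxm].
  assert (HIm : forall x, Im <= f (constC M1) x).
  { intro x. apply ginf_le with 0. intro y. left. apply Hf_bnd, Hc. }
  assert (HIm0 : 0 < Im).
  { apply Rlt_le_trans with (f (constC M1) xm). apply Hf_bnd, Hc. apply ginf_ge; auto. }
  assert (HSm0 : 0 < Sm).
  { destruct (sig_inh Omega Hne) as [x _]. apply Rlt_le_trans with (f (constC (- M1)) x); auto.
    apply Hf_bnd, Hc. }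
  set (Il := Rinf (fun y => exists x, y = tau0 x * f (constC phi_max) x)).
  assert (HIl : forall x, Il <= tau0 x * f (constC phi_max) x).
  { intro x. apply ginf_le with (g := fun y => tau0 y * f (constC phi_max) y) (B := 0). intro y. apply Rmult_le_pos; auto. left. apply Hf_bnd, Hc. }
  assert (HIl0 : 0 <= Il).
  { apply (ginf_ge Omega Hne (fun y => tau0 y * f (constC phi_max) y)). intro y. apply Rmult_le_pos; auto. left. apply Hf_bnd, Hc. }
  set (Su := Rsup (fun y => exists x, y = tau0 x * f (constC (- phi_max)) x)).
  assert (HSu : forall x, tau0 x * f (constC (- phi_max)) x <= Su).
  { intro x. apply gsup_ge with (g := fun y => tau0 y * f (constC (- phi_max)) y) (B := tau0 xT * Mf). intro y.
    pose proof (Hf_bnd _ (Hc (- phi_max)) y). pose proof (HxT y). pose proof (Htau0_pos y).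
    apply Rmult_le_compat; lra. }
  split.
  { unfold tau_min. fold Il Sm. unfold Rdiv. apply Rmult_le_pos; auto. left. apply Rinv_0_lt_compat; auto. }
  intros t x Ht Hbt.
  destruct (Htau_eq t x Ht Hbt) as [pr1 [pr2 Heq]].
  pose proof (Htau_pos t x Ht Hbt) as Htp.
  assert (HAc : forall s, s <= t -> contC n (A s)).
  { intros s Hs. apply (proj1 HA). eauto. }
  assert (HAeq : forall s, s <= 0 -> A s = phi s).
  { intros s Hs. apply functional_extensionality. auto. }
  assert (Hst : - tau0 x <= t - tau t x).
  { apply Rnot_lt_le. intro Hlt.
    assert (Hc0 : - tau0 x <= 0) by (pose proof (Htau0_pos x); lra).
    destruct (phi_bdd n Omega HOmega Hne phi Hphi (t - tau t x) (- tau0 x)) as [K HK]; try lra.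
    assert (H1 : t - tau t x <= - tau0 x <= t) by lra.
    pose (pa := RiemannInt_P22 pr1 H1). pose (pb := RiemannInt_P23 pr1 H1).
    pose proof (RiemannInt_P26 pa pb pr1) as E1.
    assert (H2 : - tau0 x <= 0 <= t) by lra.
    pose (pc := RiemannInt_P22 pb H2). pose (pd := RiemannInt_P23 pb H2).
    pose proof (RiemannInt_P26 pc pd pb) as E2.
    assert (E3 : RiemannInt pc = RiemannInt pr2).
    { apply RiemannInt_P18. lra. intros s Hs. rewrite HAeq; auto. lra. }
    assert (E4 : 0 <= RiemannInt pd).
    { pose proof (RiemannInt_P19 (RiemannInt_P14 0 t 0) pd Ht) as Hle.
      rewrite RiemannInt_P15 in Hle. replace (0 * (t - 0)) with 0 in Hle by ring. apply Hle.
      intros s Hs. unfold fct_cte. left. apply Hf_bnd, HAc. lra. }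
    set (k := f (constC K) x).
    assert (Hk : 0 < k) by (apply Hf_bnd, Hc).
    assert (E5 : k * (- tau0 x - (t - tau t x)) <= RiemannInt pa).
    { pose proof (RiemannInt_P19 (RiemannInt_P14 (t - tau t x) (- tau0 x) k) pa (proj1 H1)) as Hle.
      rewrite RiemannInt_P15 in Hle. apply Hle.
      intros s Hs. unfold fct_cte, k. rewrite HAeq by lra.
      apply Hf_dec. apply (proj1 Hphi). lra. apply Hc.
      intro y. unfold constC.
      destruct (cont_abs_bdd n Omega HOmega _ (proj1 Hphi s ltac:(lra)) Hne) as [B HB].
      apply Rle_trans with (Rabs (phi s y)). apply Rle_abs.
      apply Rle_trans with (supnorm (phi s)). apply supnorm_ge with B; auto. apply HK. lra. }
    assert (0 < k * (- tau0 x - (t - tau t x))) by (apply Rmult_lt_0_compat; lra).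
    lra. }
  assert (Hat : t - tau t x <= t) by lra.
  assert (HAr : forall s, t - tau t x < s < t -> forall y, - M1 <= A s y <= M1).
  { intros s Hs y. destruct (Rle_lt_dec 0 s) as [H0|H0].
    - pose proof (HAb s H0 (Hbelow s t Hbt ltac:(lra)) y). revert H; split_Rabs; intros; lra.
    - rewrite HAeq by lra. assert (- tau0_inf <= s <= 0). { pose proof (Hti x). lra. }
      pose proof (Hphib s H y). revert H1; split_Rabs; intros; lra. }
  assert (I1 : RiemannInt pr1 <= f (constC (- M1)) x * tau t x).
  { pose proof (RiemannInt_P19 pr1 (RiemannInt_P14 (t - tau t x) t (f (constC (- M1)) x)) Hat) as Hle.
    rewrite RiemannInt_P15 in Hle. replace (t - (t - tau t x)) with (tau t x) in Hle by ring. apply Hle.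
    intros s Hs. unfold fct_cte. apply Hf_dec. apply Hc. apply HAc; lra.
    intro y. unfold constC. apply HAr; auto. }
  assert (I2 : f (constC M1) x * tau t x <= RiemannInt pr1).
  { pose proof (RiemannInt_P19 (RiemannInt_P14 (t - tau t x) t (f (constC M1) x)) pr1 Hat) as Hle.
    rewrite RiemannInt_P15 in Hle. replace (t - (t - tau t x)) with (tau t x) in Hle by ring. apply Hle.
    intros s Hs. unfold fct_cte. apply Hf_dec. apply HAc; lra. apply Hc.
    intro y. unfold constC. apply HAr; auto. }
  assert (Hc0 : - tau0 x <= 0) by (pose proof (Htau0_pos x); lra).
  assert (Hpr : forall s, - tau0 x < s < 0 -> forall y, - phi_max <= phi s y <= phi_max).
  { intros s Hs y. assert (- tau0_inf <= s <= 0). { pose proof (Hti x). lra. }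
    pose proof (Hphib s H y). revert H0; split_Rabs; intros; lra. }
  assert (J1 : RiemannInt pr2 <= f (constC (- phi_max)) x * tau0 x).
  { pose proof (RiemannInt_P19 pr2 (RiemannInt_P14 (- tau0 x) 0 (f (constC (- phi_max)) x)) Hc0) as Hle.
    rewrite RiemannInt_P15 in Hle. replace (0 - - tau0 x) with (tau0 x) in Hle by ring. apply Hle.
    intros s Hs. unfold fct_cte. apply Hf_dec. apply Hc. apply (proj1 Hphi); lra.
    intro y. unfold constC. apply Hpr; auto. }
  assert (J2 : f (constC phi_max) x * tau0 x <= RiemannInt pr2).
  { pose proof (RiemannInt_P19 (RiemannInt_P14 (- tau0 x) 0 (f (constC phi_max) x)) pr2 Hc0) as Hle.
    rewrite RiemannInt_P15 in Hle. replace (0 - - tau0 x) with (tau0 x) in Hle by ring. apply Hle.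
    intros s Hs. unfold fct_cte. apply Hf_dec. apply (proj1 Hphi); lra. apply Hc.
    intro y. unfold constC. apply Hpr; auto. }
  pose proof (HSm x). pose proof (HIm x). pose proof (HIl x). pose proof (HSu x).
  assert (0 < f (constC M1) x) by (apply Hf_bnd, Hc).
  split.
  - unfold tau_min. fold Il Sm. apply (Rmult_le_reg_r Sm); auto. unfold Rdiv.
    rewrite Rmult_assoc, Rinv_l by lra. rewrite Rmult_1_r. nra.
  - unfold tau_max. fold Su Im. apply (Rmult_le_reg_r Im); auto. unfold Rdiv.
    rewrite Rmult_assoc, Rinv_l by lra. rewrite Rmult_1_r. nra.
Qed.
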